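(* Let $n\ge 13$ and let $CT_n$ be the set of chemical trees on $n$ vertices. For a tree $T$ write $\mathbf m(T)=(m_{3,3}(T),m_{2,3}(T),m_{1,2}(T),m_{1,3}(T),m_{2,2}(T))$. For $1\le i\le 13$ let $A_i$ be the set of trees $T\in CT_n$ with $\Delta(T)\le 3$, $n_3(T)\le 2$ and $\mathbf m(T)$ equal to the following vector: $A_1:(0,0,2,0,n-3)$; $A_2:(0,1,1,2,n-5)$; $A_3:(0,2,2,1,n-6)$; $A_4:(0,3,3,0,n-7)$; $A_5:(0,2,0,4,n-7)$; $A_6:(0,3,1,3,n-8)$; $A_7:(0,4,2,2,n-9)$; $A_8:(1,1,1,3,n-7)$; $A_9:(0,5,3,1,n-10)$; $A_{10}:(1,2,2,2,n-8)$; $A_{11}:(0,6,4,0,n-11)$; $A_{12}:(1,3,3,1,n-9)$; $A_{13}:(1,4,4,0,n-10)$. Let $\Omega(n)$ be the set of trees $T\in CT_n$ having $3$ vertices of degree $3$, $n-8$ vertices of degree $2$ and $5$ vertices of degree $1$, with $m_{1,2}(T)=m_{2,3}(T)=5$, $m_{1,3}(T)=0$, $m_{3,3}(T)=2$, $m_{2,2}(T)=n-13$. Let $T_1\in A_1$, $T_2\in A_4$, $T_3\in A_3$, $T_4\in A_2$, $T_5\in A_{13}$, $T_6\in A_{11}$, $T_7\in A_{12}$, $T_8\in A_9$, $T_9\in A_{10}$, $T_{10}\in A_7$, $T_{11}\in A_8$, $T_{12}\in A_6$, $T_{13}\in A_5$, $T_{14}\in\Omega(n)$, and let $T\in CT_n$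 not belong to $A_1\cup\cdots\cup A_{13}\cup\Omega(n)$. Then $SO(T_1)<SO(T_2)<SO(T_3)<\cdots<SO(T_{13})<SO(T_{14})<SO(T)$.
   Context: All graphs are simple and connected. A chemical graph is a graph with maximum degree at most $4$; a chemical tree is a chemical graph that is a tree. $d_G(u)$ is the degree of $u$, $\Delta(G)$ the maximum degree, $n_i(G)$ the number of vertices of degree $i$, and $m_{i,j}(G)$ the number of edges joining a vertex of degree $i$ to a vertex of degree $j$. The Sombor index is $SO(G)=\sum_{uv\in E(G)}\sqrt{d_G(u)^2+d_G(v)^2}$. *)

(* Defs.v *)
From mathcomp Require Import all_boot all_order all_algebra.
Set Implicit Arguments. Unset Strict Implicit. Unset Printing Implicit Defensive.
Import Order.TTheory GRing.Theory Num.Theory.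

Section Graphs.
Variable n : nat.
Implicit Type e : rel 'I_n.

Definition simple_graph e := irreflexive e /\ symmetric e.

Definition connected_graph e := forall x y : 'I_n, connect e x y.

Definition acyclic_graph e :=
  forall c : seq 'I_n, 3 <= size c -> uniq c -> ~~ cycle e c.

Definition is_tree e := [/\ simple_graph e, connected_graph e & acyclic_graph e].

Definition deg e (u : 'I_n) : nat := #|[set v | e u v]|.

Definition chem_tree e := is_tree e /\ forall u, deg e u <= 4.

Definition max_deg_le e (k : nat) := forall u, deg e u <= k.

Definition nverts e (i : nat) : nat := #|[set u | deg e u == i]|.

Definition medges e (i j : nat) : nat :=
  #|[set p : 'I_n * 'I_n | [&& (p.1 < p.2)%N, e p.1 p.2 &
      ((deg e p.1 == i) && (deg e p.2 == j)) ||
      ((deg e p.1 == j) && (deg e p.2 == i))]]|.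

Definition mvec e : nat * nat * nat * nat * nat :=
  (medges e 3 3, medges e 2 3, medges e 1 2, medges e 1 3, medges e 2 2).

Definition SO (R : rcfType) e : R :=
  \sum_(u : 'I_n) \sum_(v : 'I_n | (u < v)%N && e u v)
     Num.sqrt (((deg e u) ^ 2 + (deg e v) ^ 2)%N%:R).

End Graphs.

Definition Avec (n i : nat) : nat * nat * nat * nat * nat :=
  match i with
  | 1 => (0, 0, 2, 0, n - 3)
  | 2 => (0, 1, 1, 2, n - 5)
  | 3 => (0, 2, 2, 1, n - 6)
  | 4 => (0, 3, 3, 0, n - 7)
  | 5 => (0, 2, 0, 4, n - 7)
  | 6 => (0, 3, 1, 3, n - 8)
  | 7 => (0, 4, 2, 2, n - 9)
  | 8 => (1, 1, 1, 3, n - 7)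
  | 9 => (0, 5, 3, 1, n - 10)
  | 10 => (1, 2, 2, 2, n - 8)
  | 11 => (0, 6, 4, 0, n - 11)
  | 12 => (1, 3, 3, 1, n - 9)
  | 13 => (1, 4, 4, 0, n - 10)
  | _ => (0, 0, 0, 0, 0)
  end%N.

(* T in A_i (only meaningful for 1 <= i <= 13) *)
Definition in_A (n : nat) (e : rel 'I_n) (i : nat) : Prop :=
  [/\ chem_tree e, max_deg_le e 3, nverts e 3 <= 2 & mvec e = Avec n i].

Definition in_Omega (n : nat) (e : rel 'I_n) : Prop :=
  [/\ chem_tree e,
      [/\ nverts e 3 = 3, nverts e 2 = n - 8 & nverts e 1 = 5],
      [/\ medges e 1 2 = 5, medges e 2 3 = 5 & medges e 1 3 = 0] &
      (medges e 3 3 = 2 /\ medges e 2 2 = n - 13)].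

(* Main.v *)
Require Import Defs.
From mathcomp Require Import all_boot all_order all_algebra.
From mathcomp Require Import lra zify.
Import Order.TTheory GRing.Theory Num.Theory.
Set Implicit Arguments. Unset Strict Implicit. Unset Printing Implicit Defensive.

Module MG1.

Definition ES (n : nat) (e : rel 'I_n) (S : {set 'I_n}) : {set 'I_n * 'I_n} :=
  [set p : 'I_n * 'I_n | [&& (p.1 < p.2)%N, e p.1 p.2, p.1 \in S & p.2 \in S]].

Lemma crossing n (e : rel 'I_n) (S : {set 'I_n}) x y :
  connected_graph e -> x \in S -> y \notin S ->
  exists u v, [/\ u \in S, v \notin S & e u v].
Proof.
move=> hc xS yS; have /connectP [p hp hy] := hc x y; subst y.
elim: p x xS hp yS => [|z p IH] x xS /= hp yS; first by rewrite xS in yS.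
case/andP: hp => exz hp.
case: (boolP (z \in S)) => zS; first exact: IH zS hp yS.
by exists x, z.
Qed.

Definition goodp n (e : rel 'I_n) (S : {set 'I_n}) (s : seq 'I_n) : bool :=
  if s is x :: p then [&& path e x p, uniq s & all (mem S) s] else false.

Lemma leaf n (e : rel 'I_n) (S : {set 'I_n}) : irreflexive e -> symmetric e ->
  acyclic_graph e -> S != set0 -> exists2 x, x \in S & #|[set y in S | e x y]| <= 1.
Proof.
move=> irr sym acy /set0Pn [x0 x0S].
have [/existsP [x /andP [xS hx]]|hno] :=
  boolP [exists x, (x \in S) && (#|[set y in S | e x y]| <= 1)]; first by exists x.
have h2 x : x \in S -> 1 < #|[set y in S | e x y]|.
  by move=> xS; move/existsPn: hno => /(_ x); rewrite xS /= ltnNge.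
pose P k := [exists t : k.-tuple 'I_n, goodp e S t].
have ex : exists k, P k.
  by exists 1; apply/existsP; exists [tuple x0]; rewrite /= x0S.
have bnd k : P k -> k <= n.
  case/existsP=> t; case: t => [[|x p] /= /eqP <-] //.
  case/and3P=> _ hu _.
  have hc : #|x :: p| = size (x :: p) by apply/card_uniqP.
  rewrite -[(_ < n)%N]/(size (x :: p) <= n) -hc.
  by rewrite -[X in _ <= X]card_ord max_card.
case: (ex_maxnP ex bnd) => m Pm maxm.
have ext s z : goodp e S s -> z \in S -> z \notin s -> e z (head z s) ->
    (size s).+1 <= m.
  move=> gs zS zs ez; apply: maxm; apply/existsP; exists (in_tuple (z :: s)).
  case: s gs zs ez => [|x p] //= /and3P [hp hu ha] zs ez.
  by rewrite ez hp zs hu zS ha.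
case/existsP: Pm => t; case: t => s /= /eqP hsz gs.
case: s hsz gs => [|x p] // hsz gs.
have xS : x \in S by case/and3P: gs => _ _ /andP [].
have := h2 x xS.
case: p hsz gs => [|y q] hsz gs.
  move/ltnW/card_gt0P => [z]; rewrite inE => /andP [zS exz].
  suff: (size [:: x]).+1 <= m by rewrite -hsz ltnn.
  apply: (ext _ z) => //=; last by rewrite sym.
  by rewrite inE; apply/eqP => ezx; rewrite ezx irr in exz.
case/card_gt1P => z1 [z2 [hz1 hz2 hz12]].
have [z [zN zy]] : exists z, z \in [set y0 in S | e x y0] /\ z != y.
  case: (eqVneq z1 y) => h1; last by exists z1.
  by exists z2; split => //; rewrite -h1 eq_sym.
move: zN; rewrite inE => /andP [zS exz].
case: (boolP (z \in x :: y :: q)) => zs; last first.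
  suff: (size (x :: y :: q)).+1 <= m by rewrite -hsz ltnn.
  by apply: (ext _ z) => //; rewrite /= sym.
have zx : z != x by apply/eqP => ezx; rewrite ezx irr in exz.
move: zs; rewrite !inE (negbTE zx) (negbTE zy) /= => zq.
case/splitPr: zq gs hsz => q1 q2 gs hsz.
case/and3P: gs => hp hu ha.
have hs : 3 <= size (x :: y :: q1 ++ [:: z]) by rewrite /= size_cat addn1.
have hu' : uniq (x :: y :: q1 ++ [:: z]).
  move: hu; rewrite -[q1 ++ z :: q2]/(q1 ++ [:: z] ++ q2) catA -!cat_cons.
  by rewrite cat_uniq => /andP [].
have hc : cycle e (x :: y :: q1 ++ [:: z]).
  rewrite /= rcons_cat /= cat_path /=.
  move: hp; rewrite /= cat_path /= => /and3P [-> -> /andP [-> _]].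
  by rewrite sym exz.
by have := acy _ hs hu'; rewrite hc.
Qed.

End MG1.
Import MG1.

Module MG2.

Definition ord2 n (u v : 'I_n) : 'I_n * 'I_n := if (u < v)%N then (u, v) else (v, u).

Lemma forest n (e : rel 'I_n) (S : {set 'I_n}) : irreflexive e -> symmetric e ->
  acyclic_graph e -> #|ES e S| <= #|S| - 1.
Proof.
move=> irr sym acy.
move: {2}#|S| (erefl #|S|) => k; elim: k S => [|k IH] S hS.
  have -> : S = set0 by apply/eqP; rewrite -cards_eq0 hS.
  rewrite cards0 /= leqn0 cards_eq0; apply/eqP/setP => p; by rewrite !inE !andbF.
have : S != set0 by rewrite -card_gt0 hS.
case/(leaf irr sym acy) => x xS hN.
have hS' : #|S :\ x| = k by move: hS; rewrite (cardsD1 x) xS add1n => -[].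
have IHk := IH _ hS'.
have hNS : [set y in S | e x y] \subset S :\ x.
  apply/subsetP => y; rewrite !inE => /andP [-> exy]; rewrite andbT.
  by apply/eqP => eyx; rewrite eyx irr in exy.
have hNk := subset_leq_card hNS; rewrite hS' in hNk.
pose f := fun y : 'I_n => ord2 x y.
have hsub : ES e S \subset ES e (S :\ x) :|: (f @: [set y in S | e x y]).
  apply/subsetP => -[a b]; rewrite !inE /= => /and4P [ab eab aS bS].
  case: (eqVneq a x) => [ax|ax]; last case: (eqVneq b x) => [bx|bx].
  - apply/orP; right; subst a; apply/imsetP; exists b; first by rewrite inE bS.
    by rewrite /f /ord2 ab.
  - apply/orP; right; subst b; apply/imsetP; exists a; first by rewrite inE aS sym.
    by rewrite /f /ord2 ltnNge (ltnW ab).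
  - by rewrite ab eab aS bS.
have := subset_leq_card hsub; rewrite cardsU => h1.
have h2 : #|f @: [set y in S | e x y]| <= #|[set y in S | e x y]| := leq_imset_card _ _.
clearbody f.
move: h1 h2 hN hNk IHk; rewrite hS' hS.
set A := #|ES e (S :\ x)|; set B := #|f @: _|; set N := #|[set y in S | e x y]|.
set C := #|_ :&: _|. set D := #|ES e S|.
lia.
Qed.

Lemma ES_sub n (e : rel 'I_n) (S S' : {set 'I_n}) : S \subset S' -> ES e S \subset ES e S'.
Proof.
move/subsetP=> h; apply/subsetP => p; rewrite !inE => /and4P [-> -> /h -> /h ->] //.
Qed.

Lemma growth n (e : rel 'I_n) : irreflexive e -> symmetric e -> connected_graph e ->
  forall k, k < n -> exists S : {set 'I_n}, #|S| = k.+1 /\ k <= #|ES e S|.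
Proof.
move=> irr sym hc; elim=> [|k IH] hk.
  by exists [set Ordinal hk]; rewrite cards1.
have [S [hS hE]] := IH (ltnW hk).
have [x xS] : exists x, x \in S by apply/card_gt0P; rewrite hS.
have [y yS] : exists y, y \in ~: S.
  apply/card_gt0P; have := cardsC S; rewrite card_ord hS; lia.
rewrite inE in yS.
have [u [v [uS vS euv]]] := crossing hc xS yS.
exists (v |: S); split; first by rewrite cardsU1 vS hS.
have hsub : ord2 u v |: ES e S \subset ES e (v |: S).
  apply/subsetP => p; rewrite !inE => /orP [/eqP ->|].
    rewrite /ord2; case: ifP => /= huv; rewrite ?huv ?euv ?eqxx ?uS ?orbT //=.
    have : u != v by apply/eqP => h; rewrite h irr in euv.
    by rewrite neq_ltn huv /= => ->; rewrite sym euv.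
  by move=> /and4P [-> -> -> ->]; rewrite !orbT.
have := subset_leq_card hsub; rewrite cardsU1.
have -> : ord2 u v \notin ES e S.
  by rewrite /ord2 !inE; case: ifP => /=; rewrite (negbTE vS) ?andbF.
rewrite add1n => h; exact: leq_ltn_trans hE h.
Qed.

End MG2.
Import MG2.

Module MG3.

Lemma edges_tree n (e : rel 'I_n) : is_tree e -> 0 < n -> #|ES e setT| = n - 1.
Proof.
move=> [[irr sym] hc acy] n0; apply/eqP; rewrite eqn_leq; apply/andP; split.
  by have := forest setT irr sym acy; rewrite cardsT card_ord.
have [|S [_ hS]] := growth irr sym hc (k := n - 1); first lia.
apply: (leq_trans hS); apply: subset_leq_card; apply: ES_sub; exact: subsetT.
Qed.

Lemma deg_gt0 n (e : rel 'I_n) : connected_graph e -> 1 < n -> forall u, 0 < deg e u.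
Proof.
move=> hc n1 u.
have [y yS] : exists y, y \in ~: [set u].
  apply/card_gt0P; have := cardsC [set u]; rewrite card_ord cards1; lia.
rewrite inE in yS.
have [a [b [aS bS eab]]] := crossing hc (set11 u) yS.
move: aS; rewrite inE => /eqP hau; subst a; apply/card_gt0P; exists b; by rewrite inE.
Qed.

Lemma card_sumb (T : finType) (P : pred T) : #|[set x | P x]| = \sum_(x : T) (P x : nat).
Proof.
rewrite -sum1_card big_mkcond /=; apply: eq_bigr => x _; rewrite inE; by case: (P x).
Qed.

Lemma hand n (e : rel 'I_n) (h : 'I_n -> nat) : irreflexive e -> symmetric e ->
  \sum_(p in ES e setT) (h p.1 + h p.2) = \sum_(u : 'I_n) deg e u * h u.
Proof.
move=> irr sym.
have -> : \sum_(u : 'I_n) deg e u * h u = \sum_(u : 'I_n) \sum_(v | e u v) h u.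
  apply: eq_bigr => u _; rewrite /deg -sum_nat_const; apply: eq_bigl => v; by rewrite inE.
rewrite pair_big_dep /= [RHS](bigID (fun p : 'I_n * 'I_n => (p.1 < p.2)%N)) /=.
rewrite big_split /=; congr (_ + _); first by apply: eq_bigl => p; rewrite !inE !andbT andbC.
rewrite [RHS](reindex_inj (h := fun p : 'I_n * 'I_n => (p.2, p.1))) /=; last first.
  by move=> [a b] [c d] /= [-> ->].
apply: eq_bigl => -[a b] /=; rewrite !inE !andbT sym.
rewrite /= [e b a]sym andbC.
case: (boolP (e a b)) => //= eab.
have hab : (a : nat) != b by apply/eqP => /val_inj hh; rewrite hh irr in eab.
by rewrite -leqNgt ltn_neqAle hab.
Qed.

Lemma nv_sum n (e : rel 'I_n) : (forall u, 0 < deg e u <= 4) ->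
  nverts e 1 + nverts e 2 + nverts e 3 + nverts e 4 = n.
Proof.
move=> hd; rewrite /nverts !card_sumb -!big_split /=.
rewrite -[RHS]card_ord -sum1_card; apply: eq_bigr => u _.
have := hd u; case: (deg e u) => [|[|[|[|[|k]]]]] //.
Qed.

Lemma hand_k n (e : rel 'I_n) k : \sum_(u : 'I_n) deg e u * (deg e u == k) = k * nverts e k.
Proof.
rewrite /nverts card_sumb big_distrr /=; apply: eq_bigr => u _.
by case: eqP => [->|]; rewrite ?muln0.
Qed.

Definition cnd (a b i j : nat) : bool := ((a == i) && (b == j)) || ((a == j) && (b == i)).

Lemma medges_sum n (e : rel 'I_n) i j :
  medges e i j = \sum_(p in ES e setT) (cnd (deg e p.1) (deg e p.2) i j : nat).
Proof.
rewrite /medges card_sumb [RHS]big_mkcond /=; apply: eq_bigr => p _; rewrite !inE !andbT /cnd.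
by case: (p.1 < p.2)%N; case: (e p.1 p.2).
Qed.

Local Open Scope ring_scope.
Lemma decomp_pt (V : nmodType) (f : nat -> nat -> V) :
  (forall a b, f a b = f b a) -> forall a b : nat, (0 < a <= 4)%N -> (0 < b <= 4)%N ->
  f a b = f 1 1 *+ cnd a b 1 1 + f 1 2 *+ cnd a b 1 2 + f 1 3 *+ cnd a b 1 3
        + f 1 4 *+ cnd a b 1 4 + f 2 2 *+ cnd a b 2 2 + f 2 3 *+ cnd a b 2 3
        + f 2 4 *+ cnd a b 2 4 + f 3 3 *+ cnd a b 3 3 + f 3 4 *+ cnd a b 3 4
        + f 4 4 *+ cnd a b 4 4.
Proof.
move=> fs a b.
case: a => [|[|[|[|[|a]]]]] //; case: b => [|[|[|[|[|b]]]]] //= _ _;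
  rewrite /cnd /= !mulr0n !mulr1n ?add0r ?addr0 //.
Qed.

End MG3.
Import MG3.

Module MG4.

Lemma natmulE (x m : nat) : (x *+ m)%R = x * m.
Proof. elim: m => [|m IH]; first by rewrite muln0. by rewrite GRing.mulrS IH mulnS. Qed.

Lemma decomp (V : nmodType) n (e : rel 'I_n) (f : nat -> nat -> V) :
  (forall a b, f a b = f b a) -> (forall u, (0 < deg e u <= 4)%N) ->
  (\sum_(p in ES e setT) f (deg e p.1) (deg e p.2) =
  f 1 1 *+ medges e 1 1 + f 1 2 *+ medges e 1 2 + f 1 3 *+ medges e 1 3
        + f 1 4 *+ medges e 1 4 + f 2 2 *+ medges e 2 2 + f 2 3 *+ medges e 2 3
        + f 2 4 *+ medges e 2 4 + f 3 3 *+ medges e 3 3 + f 3 4 *+ medges e 3 4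
        + f 4 4 *+ medges e 4 4)%R.
Proof.
move=> fs hd.
rewrite (eq_bigr _ (fun p _ => decomp_pt fs (hd p.1) (hd p.2))) !big_split /=.
by rewrite !sumrMnr -!medges_sum.
Qed.

Lemma SO_ES (R : rcfType) n (e : rel 'I_n) :
  SO R e = (\sum_(p in ES e setT) Num.sqrt (((deg e p.1) ^ 2 + (deg e p.2) ^ 2)%N%:R))%R.
Proof.
rewrite /SO pair_big_dep /=; apply: eq_bigl => p; by rewrite !inE !andbT.
Qed.

Lemma medges_pos n (e : rel 'I_n) a b i j : irreflexive e -> symmetric e ->
  e a b -> cnd (deg e a) (deg e b) i j -> (0 < medges e i j)%N.
Proof.
move=> irr sym eab hc; apply/card_gt0P; exists (ord2 a b); rewrite inE /ord2.
case: ifP => /= hab; first by rewrite hab eab.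
have hne : (a : nat) != b by apply/eqP => /val_inj hh; rewrite hh irr in eab.
have -> : (b < a)%N by rewrite ltn_neqAle eq_sym hne leqNgt hab.
rewrite sym eab /=; move: hc; rewrite /cnd.
by case: (deg e a == i); case: (deg e b == j); case: (deg e a == j); case: (deg e b == i).
Qed.

End MG4.
Import MG4.

Module MG5.

Lemma decomp_nat n (e : rel 'I_n) (f : nat -> nat -> nat) :
  (forall a b, f a b = f b a) -> (forall u, (0 < deg e u <= 4)%N) ->
  \sum_(p in ES e setT) f (deg e p.1) (deg e p.2) =
  f 1 1 * medges e 1 1 + f 1 2 * medges e 1 2 + f 1 3 * medges e 1 3
        + f 1 4 * medges e 1 4 + f 2 2 * medges e 2 2 + f 2 3 * medges e 2 3
        + f 2 4 * medges e 2 4 + f 3 3 * medges e 3 3 + f 3 4 * medges e 3 4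
        + f 4 4 * medges e 4 4.
Proof. move=> fs hd; by rewrite (decomp fs hd) !natmulE. Qed.

Lemma deg_range n (e : rel 'I_n) : chem_tree e -> (1 < n)%N -> forall u, (0 < deg e u <= 4)%N.
Proof. by move=> [[_ hc _] h4] n1 u; rewrite deg_gt0 // h4. Qed.

Lemma hs_gen n (e : rel 'I_n) k : simple_graph e -> (forall u, (0 < deg e u <= 4)%N) ->
  k * nverts e k =
  ((1 == k) + (1 == k)) * medges e 1 1 + ((1 == k) + (2 == k)) * medges e 1 2
  + ((1 == k) + (3 == k)) * medges e 1 3 + ((1 == k) + (4 == k)) * medges e 1 4
  + ((2 == k) + (2 == k)) * medges e 2 2 + ((2 == k) + (3 == k)) * medges e 2 3
  + ((2 == k) + (4 == k)) * medges e 2 4 + ((3 == k) + (3 == k)) * medges e 3 3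
  + ((3 == k) + (4 == k)) * medges e 3 4 + ((4 == k) + (4 == k)) * medges e 4 4.
Proof.
move=> [irr sym] hd.
rewrite -hand_k -(hand (fun u => (deg e u == k) : nat) irr sym).
rewrite (decomp_nat (f := fun a b => ((a == k) + (b == k))%N)) //.
by move=> a b; rewrite addnC.
Qed.

Lemma edges_sum n (e : rel 'I_n) : chem_tree e -> (1 < n)%N ->
  medges e 1 1 + medges e 1 2 + medges e 1 3 + medges e 1 4 + medges e 2 2
  + medges e 2 3 + medges e 2 4 + medges e 3 3 + medges e 3 4 + medges e 4 4 = n - 1.
Proof.
move=> ct n1; have hd := deg_range ct n1.
rewrite -(edges_tree ct.1 (ltnW n1)) -sum1_card.
rewrite (decomp_nat (f := fun _ _ => 1%N)) //; by rewrite !mul1n.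
Qed.

Lemma nverts_sum n (e : rel 'I_n) k : nverts e k = \sum_u (deg e u == k : nat).
Proof. by rewrite /nverts card_sumb. Qed.

Lemma forest_deg n (e : rel 'I_n) : chem_tree e -> (1 < n)%N ->
  medges e 3 3 + medges e 3 4 + medges e 4 4 <= nverts e 3 + nverts e 4 - 1.
Proof.
move=> ct n1; have hd := deg_range ct n1.
case: ct => [[[irr sym] hc acy] _].
pose S3 := [set u | (3 <= deg e u)%N].
have := forest S3 irr sym acy.
have -> : #|S3| = nverts e 3 + nverts e 4.
  rewrite card_sumb !nverts_sum -big_split /=; apply: eq_bigr => u _.
  by have := hd u; case: (deg e u) => [|[|[|[|[|k]]]]].
have -> : #|ES e S3| = \sum_(p in ES e setT) ((3 <= deg e p.1) && (3 <= deg e p.2) : nat).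
  rewrite card_sumb [RHS]big_mkcond /=; apply: eq_bigr => p _; rewrite !inE.
  by case: (p.1 < p.2)%N; case: (e p.1 p.2).
rewrite (decomp_nat (f := fun a b => ((3 <= a) && (3 <= b) : nat))) //=; last first.
  by move=> a b; rewrite andbC.
lia.
Qed.

Lemma m11_0 n (e : rel 'I_n) : chem_tree e -> (2 < n)%N -> medges e 1 1 = 0.
Proof.
move=> [[[irr sym] hc acy] _] n2.
apply/eqP; rewrite cards_eq0; apply/eqP/setP => -[a b]; rewrite !inE /=.
apply/negP => /and3P [_ eab /orP hd].
have [da db] : deg e a = 1 /\ deg e b = 1 by case: hd => /andP [/eqP -> /eqP ->].
have [y yS] : exists y, y \in ~: [set a; b].
  apply/card_gt0P; have := cardsC [set a; b]; rewrite card_ord.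
  have := cards2 a b; case: (a != b) => /= ->; lia.
rewrite inE in yS.
have [u [v [uS vS euv]]] := crossing hc (setU11 a [set b]) yS.
have one : forall x w w', deg e x = 1 -> e x w -> e x w' -> w = w'.
  move=> x w w' dx exw exw'; move/eqP: dx; rewrite /deg => /cards1P [z hz].
  have : w \in [set z] by rewrite -hz inE.
  have : w' \in [set z] by rewrite -hz inE.
  by rewrite !inE => /eqP -> /eqP ->.
move: uS vS; rewrite !inE => /orP [] /eqP hu; subst u => hv.
  by rewrite (one _ _ _ da euv eab) eqxx orbT in hv.
by rewrite (one _ _ _ db euv (etrans (sym b a) eab)) eqxx in hv.
Qed.

End MG5.
Import MG5.

Module MG6.

Lemma medges_pos' n (e : rel 'I_n) i j a b da db : irreflexive e -> symmetric e ->
  e a b -> deg e a = da -> deg e b = db -> cnd da db i j -> (0 < medges e i j)%N.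
Proof. move=> irr sym eab ha hb; rewrite -ha -hb; exact: medges_pos. Qed.

Lemma sum3_pos (a b c : nat) : [|| (0 < a)%N, (0 < b)%N | (0 < c)%N] -> (0 < a + b + c)%N.
Proof. case/or3P; lia. Qed.

Lemma cross2_aux n (e : rel 'I_n) : chem_tree e -> (1 < n)%N -> (0 < nverts e 2)%N ->
  (0 < nverts e 1 + nverts e 3 + nverts e 4)%N ->
  exists a b, [/\ e a b, deg e a = 2 & [|| deg e b == 1, deg e b == 3 | deg e b == 4]].
Proof.
move=> ct n1 h2 h134; have hd := deg_range ct n1.
case: (ct) => [[[irr sym] hc acy] _].
move/card_gt0P: h2 => [x]; rewrite inE => hx.
have [y hy] : exists y, deg e y != 2.
  have : (0 < nverts e 1 \/ 0 < nverts e 3 \/ 0 < nverts e 4)%N by lia.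
  by case=> [|[]] /card_gt0P [y]; rewrite inE => /eqP hy; exists y; rewrite hy.
have xS : x \in [set u | deg e u == 2] by rewrite inE.
have yS : y \notin [set u | deg e u == 2] by rewrite inE.
have [a [b [aS bS eab]]] := crossing hc xS yS.
exists a, b; rewrite !inE in aS bS; split => //; first exact/eqP.
by move: (hd b) bS; case: (deg e b) => [|[|[|[|[|k]]]]].
Qed.

Lemma cross2 n (e : rel 'I_n) : chem_tree e -> (1 < n)%N -> (0 < nverts e 2)%N ->
  (0 < nverts e 1 + nverts e 3 + nverts e 4)%N ->
  (0 < medges e 1 2 + medges e 2 3 + medges e 2 4)%N.
Proof.
move=> ct n1 h2 h134.
have [a [b [eab da hb]]] := cross2_aux ct n1 h2 h134.
case: (ct) => [[[irr sym] hc acy] _].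
apply: sum3_pos.
case/or3P: hb => /eqP hb.
- apply/or3P; apply: Or31; exact: (medges_pos' (i := 1) (j := 2) irr sym eab da hb isT).
- apply/or3P; apply: Or32; exact: (medges_pos' (i := 2) (j := 3) irr sym eab da hb isT).
- apply/or3P; apply: Or33; exact: (medges_pos' (i := 2) (j := 4) irr sym eab da hb isT).
Qed.

Local Open Scope ring_scope.

Lemma SO_m (R : rcfType) n (e : rel 'I_n) : chem_tree e -> (1 < n)%N ->
  SO R e = (medges e 1 1)%:R * Num.sqrt 2 + (medges e 1 2)%:R * Num.sqrt 5
   + (medges e 1 3)%:R * Num.sqrt 10 + (medges e 1 4)%:R * Num.sqrt 17
   + (medges e 2 2)%:R * Num.sqrt 8 + (medges e 2 3)%:R * Num.sqrt 13
   + (medges e 2 4)%:R * Num.sqrt 20 + (medges e 3 3)%:R * Num.sqrt 18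
   + (medges e 3 4)%:R * Num.sqrt 25 + (medges e 4 4)%:R * Num.sqrt 32.
Proof.
move=> ct n1; have hd := deg_range ct n1.
rewrite SO_ES (decomp (f := fun a b => Num.sqrt (((a ^ 2 + b ^ 2)%N)%:R : R))) //; last first.
  by move=> a b; rewrite addnC.
rewrite !mulr_natl.
by [].
Qed.

End MG6.
Import MG6.

Module MN1.
Local Open Scope ring_scope.

Lemma sqrt_lb (R : rcfType) (x k : R) : 0 <= x -> x ^+ 2 <= k -> x <= Num.sqrt k.
Proof. move=> hx hk; rewrite -(ger0_norm hx) -sqrtr_sqr; exact: ler_wsqrtr. Qed.

Lemma sqrt_ub (R : rcfType) (x k : R) : 0 <= x -> k <= x ^+ 2 -> Num.sqrt k <= x.
Proof. move=> hx hk; rewrite -(ger0_norm hx) -sqrtr_sqr; exact: ler_wsqrtr. Qed.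

Lemma sqb (R : rcfType) (k a b : nat) :
  ((a%:R + b%:R / 10000) ^+ 2 <= k%:R :> R) ->
  (k%:R <= (a%:R + (b.+1)%:R / 10000) ^+ 2 :> R) ->
  a%:R + b%:R / 10000 <= Num.sqrt (k%:R : R) <= a%:R + (b.+1)%:R / 10000.
Proof.
move=> h1 h2; apply/andP; split; [apply: sqrt_lb | apply: sqrt_ub] => //.
  by apply: addr_ge0; rewrite ?divr_ge0 ?ler0n.
by apply: addr_ge0; rewrite ?divr_ge0 ?ler0n.
Qed.

Lemma s2b (R : rcfType) : (1 + (41 * 100 + 42) / (100 * 100)) <= Num.sqrt (2 : R) <= (1 + (41 * 100 + 43) / (100 * 100)).
Proof.
have -> : ((1 + (41 * 100 + 42) / (100 * 100)) : R) = 1%:R + (4142%N)%:R / 10000 by lra.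
have -> : ((1 + (41 * 100 + 43) / (100 * 100)) : R) = 1%:R + (4143%N)%:R / 10000 by lra.
apply: (sqb (a := 1) (b := 4142)); lra.
Qed.

Lemma s5b (R : rcfType) : (2 + (23 * 100 + 60) / (100 * 100)) <= Num.sqrt (5 : R) <= (2 + (23 * 100 + 61) / (100 * 100)).
Proof.
have -> : ((2 + (23 * 100 + 60) / (100 * 100)) : R) = 2%:R + (2360%N)%:R / 10000 by lra.
have -> : ((2 + (23 * 100 + 61) / (100 * 100)) : R) = 2%:R + (2361%N)%:R / 10000 by lra.
apply: (sqb (a := 2) (b := 2360)); lra.
Qed.

Lemma s8b (R : rcfType) : (2 + (82 * 100 + 84) / (100 * 100)) <= Num.sqrt (8 : R) <= (2 + (82 * 100 + 85) / (100 * 100)).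
Proof.
have -> : ((2 + (82 * 100 + 84) / (100 * 100)) : R) = 2%:R + (8284%N)%:R / 10000 by lra.
have -> : ((2 + (82 * 100 + 85) / (100 * 100)) : R) = 2%:R + (8285%N)%:R / 10000 by lra.
apply: (sqb (a := 2) (b := 8284)); lra.
Qed.

Lemma s10b (R : rcfType) : (3 + (16 * 100 + 22) / (100 * 100)) <= Num.sqrt (10 : R) <= (3 + (16 * 100 + 23) / (100 * 100)).
Proof.
have -> : ((3 + (16 * 100 + 22) / (100 * 100)) : R) = 3%:R + (1622%N)%:R / 10000 by lra.
have -> : ((3 + (16 * 100 + 23) / (100 * 100)) : R) = 3%:R + (1623%N)%:R / 10000 by lra.
apply: (sqb (a := 3) (b := 1622)); lra.
Qed.

Lemma s13b (R : rcfType) : (3 + (60 * 100 + 55) / (100 * 100)) <= Num.sqrt (13 : R) <= (3 + (60 * 100 + 56) / (100 * 100)).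
Proof.
have -> : ((3 + (60 * 100 + 55) / (100 * 100)) : R) = 3%:R + (6055%N)%:R / 10000 by lra.
have -> : ((3 + (60 * 100 + 56) / (100 * 100)) : R) = 3%:R + (6056%N)%:R / 10000 by lra.
apply: (sqb (a := 3) (b := 6055)); lra.
Qed.

Lemma s17b (R : rcfType) : (4 + (12 * 100 + 31) / (100 * 100)) <= Num.sqrt (17 : R) <= (4 + (12 * 100 + 32) / (100 * 100)).
Proof.
have -> : ((4 + (12 * 100 + 31) / (100 * 100)) : R) = 4%:R + (1231%N)%:R / 10000 by lra.
have -> : ((4 + (12 * 100 + 32) / (100 * 100)) : R) = 4%:R + (1232%N)%:R / 10000 by lra.
apply: (sqb (a := 4) (b := 1231)); lra.
Qed.

Lemma s18b (R : rcfType) : (4 + (24 * 100 + 26) / (100 * 100)) <= Num.sqrt (18 : R) <= (4 + (24 * 100 + 27) / (100 * 100)).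
Proof.
have -> : ((4 + (24 * 100 + 26) / (100 * 100)) : R) = 4%:R + (2426%N)%:R / 10000 by lra.
have -> : ((4 + (24 * 100 + 27) / (100 * 100)) : R) = 4%:R + (2427%N)%:R / 10000 by lra.
apply: (sqb (a := 4) (b := 2426)); lra.
Qed.

Lemma s20b (R : rcfType) : (4 + (47 * 100 + 21) / (100 * 100)) <= Num.sqrt (20 : R) <= (4 + (47 * 100 + 22) / (100 * 100)).
Proof.
have -> : ((4 + (47 * 100 + 21) / (100 * 100)) : R) = 4%:R + (4721%N)%:R / 10000 by lra.
have -> : ((4 + (47 * 100 + 22) / (100 * 100)) : R) = 4%:R + (4722%N)%:R / 10000 by lra.
apply: (sqb (a := 4) (b := 4721)); lra.
Qed.

Lemma s25b (R : rcfType) : (5 + (0 * 100 + 0) / (100 * 100)) <= Num.sqrt (25 : R) <= (5 + (0 * 100 + 1) / (100 * 100)).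
Proof.
have -> : ((5 + (0 * 100 + 0) / (100 * 100)) : R) = 5%:R + (0%N)%:R / 10000 by lra.
have -> : ((5 + (0 * 100 + 1) / (100 * 100)) : R) = 5%:R + (1%N)%:R / 10000 by lra.
apply: (sqb (a := 5) (b := 0)); lra.
Qed.

Lemma s32b (R : rcfType) : (5 + (65 * 100 + 68) / (100 * 100)) <= Num.sqrt (32 : R) <= (5 + (65 * 100 + 69) / (100 * 100)).
Proof.
have -> : ((5 + (65 * 100 + 68) / (100 * 100)) : R) = 5%:R + (6568%N)%:R / 10000 by lra.
have -> : ((5 + (65 * 100 + 69) / (100 * 100)) : R) = 5%:R + (6569%N)%:R / 10000 by lra.
apply: (sqb (a := 5) (b := 6568)); lra.
Qed.


End MN1.
Import MN1.

Module MN2.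
Local Open Scope ring_scope.

Definition SOv (R : rcfType) (n a b c d k : nat) : R :=
  a%:R * Num.sqrt 18 + b%:R * Num.sqrt 13 + c%:R * Num.sqrt 5 + d%:R * Num.sqrt 10
  + (n%:R - k%:R) * Num.sqrt 8.


Lemma chain (R : rcfType) (n : nat) :
  [/\ SOv R n 0 0 2 0 3 < SOv R n 0 3 3 0 7, SOv R n 0 3 3 0 7 < SOv R n 0 2 2 1 6,
      SOv R n 0 2 2 1 6 < SOv R n 0 1 1 2 5, SOv R n 0 1 1 2 5 < SOv R n 1 4 4 0 10 &
  [/\ SOv R n 1 4 4 0 10 < SOv R n 0 6 4 0 11, SOv R n 0 6 4 0 11 < SOv R n 1 3 3 1 9,
      SOv R n 1 3 3 1 9 < SOv R n 0 5 3 1 10, SOv R n 0 5 3 1 10 < SOv R n 1 2 2 2 8 &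
  [/\ SOv R n 1 2 2 2 8 < SOv R n 0 4 2 2 9, SOv R n 0 4 2 2 9 < SOv R n 1 1 1 3 7,
      SOv R n 1 1 1 3 7 < SOv R n 0 3 1 3 8, SOv R n 0 3 1 3 8 < SOv R n 0 2 0 4 7 &
      SOv R n 0 2 0 4 7 < SOv R n 2 5 5 0 13]]].
Proof.
move: (s5b R) (s8b R) (s10b R) (s13b R) (s18b R).
move=> /andP [a1 a2] /andP [b1 b2] /andP [c1 c2] /andP [d1 d2] /andP [f1 f2].
rewrite /SOv; split; [lra|lra|lra|lra|split]; [lra|lra|lra|lra|split]; lra.
Qed.

End MN2.
Import MN2.

Module MN3.
Local Open Scope ring_scope.
Lemma d2b (R : rcfType) : (1 + (41 * 100 + 42) / (100 * 100)) - (2 + (82 * 100 + 85) / (100 * 100)) <= Num.sqrt (2 : R) - Num.sqrt 8.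
Proof. move: (s2b R) (s8b R) => /andP [a1 a2] /andP [b1 b2]. lra. Qed.

Lemma d5b (R : rcfType) : (2 + (23 * 100 + 60) / (100 * 100)) - (2 + (82 * 100 + 85) / (100 * 100)) <= Num.sqrt (5 : R) - Num.sqrt 8.
Proof. move: (s5b R) (s8b R) => /andP [a1 a2] /andP [b1 b2]. lra. Qed.

Lemma d10b (R : rcfType) : (3 + (16 * 100 + 22) / (100 * 100)) - (2 + (82 * 100 + 85) / (100 * 100)) <= Num.sqrt (10 : R) - Num.sqrt 8.
Proof. move: (s10b R) (s8b R) => /andP [a1 a2] /andP [b1 b2]. lra. Qed.

Lemma d13b (R : rcfType) : (3 + (60 * 100 + 55) / (100 * 100)) - (2 + (82 * 100 + 85) / (100 * 100)) <= Num.sqrt (13 : R) - Num.sqrt 8.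
Proof. move: (s13b R) (s8b R) => /andP [a1 a2] /andP [b1 b2]. lra. Qed.

Lemma d17b (R : rcfType) : (4 + (12 * 100 + 31) / (100 * 100)) - (2 + (82 * 100 + 85) / (100 * 100)) <= Num.sqrt (17 : R) - Num.sqrt 8.
Proof. move: (s17b R) (s8b R) => /andP [a1 a2] /andP [b1 b2]. lra. Qed.

Lemma d18b (R : rcfType) : (4 + (24 * 100 + 26) / (100 * 100)) - (2 + (82 * 100 + 85) / (100 * 100)) <= Num.sqrt (18 : R) - Num.sqrt 8.
Proof. move: (s18b R) (s8b R) => /andP [a1 a2] /andP [b1 b2]. lra. Qed.

Lemma d20b (R : rcfType) : (4 + (47 * 100 + 21) / (100 * 100)) - (2 + (82 * 100 + 85) / (100 * 100)) <= Num.sqrt (20 : R) - Num.sqrt 8.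
Proof. move: (s20b R) (s8b R) => /andP [a1 a2] /andP [b1 b2]. lra. Qed.

Lemma d25b (R : rcfType) : (5 + (0 * 100 + 0) / (100 * 100)) - (2 + (82 * 100 + 85) / (100 * 100)) <= Num.sqrt (25 : R) - Num.sqrt 8.
Proof. move: (s25b R) (s8b R) => /andP [a1 a2] /andP [b1 b2]. lra. Qed.

Lemma d32b (R : rcfType) : (5 + (65 * 100 + 68) / (100 * 100)) - (2 + (82 * 100 + 85) / (100 * 100)) <= Num.sqrt (32 : R) - Num.sqrt 8.
Proof. move: (s32b R) (s8b R) => /andP [a1 a2] /andP [b1 b2]. lra. Qed.


End MN3.
Import MN3.

Module MN4.
Local Open Scope ring_scope.

Lemma prodlb (R : rcfType) (x : nat) (s t lo : R) : lo <= s - t -> x%:R * lo <= x%:R * s - x%:R * t.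
Proof. by move=> h; rewrite -mulrBr; apply: ler_wpM2l; rewrite ?ler0n. Qed.

Lemma tup5 (a b c d f a' b' c' d' f' : nat) : a = a' -> b = b' -> c = c' -> d = d' -> f = f' ->
  (a, b, c, d, f) = (a', b', c', d', f').
Proof. by move=> -> -> -> -> ->. Qed.

Lemma final (R : rcfType) (n v1 v2 v3 v4 m11 m12 m13 m14 m22 m23 m24 m33 m34 m44 : nat) :
  (13 <= n)%N ->
  (v1 + v2 + v3 + v4 = n)%N ->
  (m11 + m12 + m13 + m14 + m22 + m23 + m24 + m33 + m34 + m44 = n - 1)%N ->
  (v1 = 2 * m11 + m12 + m13 + m14)%N ->
  (2 * v2 = m12 + 2 * m22 + m23 + m24)%N ->
  (3 * v3 = m13 + m23 + 2 * m33 + m34)%N ->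
  (4 * v4 = m14 + m24 + m34 + 2 * m44)%N ->
  (m33 + m34 + m44 <= v3 + v4 - 1)%N ->
  m11 = 0%N ->
  ((0 < v2)%N -> (0 < v1 + v3 + v4)%N -> (0 < m12 + m23 + m24)%N) ->
  (v4 = 0%N -> (v3 <= 2)%N -> forall i, (1 <= i <= 13)%N -> (m33, m23, m12, m13, m22) <> Avec n i) ->
  ~ (v3 = 3 /\ v2 = n - 8 /\ v1 = 5 /\ m12 = 5 /\ m23 = 5 /\ m13 = 0 /\ m33 = 2 /\ m22 = n - 13)%N ->
  SOv R n 2 5 5 0 13 < m11%:R * Num.sqrt 2 + m12%:R * Num.sqrt 5 + m13%:R * Num.sqrt 10 + m14%:R * Num.sqrt 17 + m22%:R * Num.sqrt 8 + m23%:R * Num.sqrt 13 + m24%:R * Num.sqrt 20 + m33%:R * Num.sqrt 18 + m34%:R * Num.sqrt 25 + m44%:R * Num.sqrt 32.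
Proof.
move=> hn hv hm h1 h2 h3 h4 hf h11 hc hA hO.
have hv1 : (v1 = 2 + v3 + 2 * v4)%N by lia.
have [[h4z h3le]|hcase] : ((v4 = 0 /\ v3 <= 2) \/ (0 < v4 \/ (v4 = 0 /\ 3 <= v3)))%N by lia.
  have hc' := hc ltac:(lia) ltac:(lia).
  have hA' := hA h4z h3le.
  exfalso.
  have : (v3 = 0 \/ v3 = 1 \/ v3 = 2)%N by lia.
  case=> [h|[h|h]].
  - by apply: (hA' 1 isT); apply: tup5; lia.
  - have : (m13 = 0 \/ m13 = 1 \/ m13 = 2)%N by lia.
    case=> [h'|[h'|h']].
    + by apply: (hA' 4 isT); apply: tup5; lia.
    + by apply: (hA' 3 isT); apply: tup5; lia.
    + by apply: (hA' 2 isT); apply: tup5; lia.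
  - have : (m33 = 0 \/ m33 = 1)%N by lia.
    case=> h''.
    + have : (m13 = 0 \/ m13 = 1 \/ m13 = 2 \/ m13 = 3 \/ m13 = 4)%N by lia.
      case=> [h'|[h'|[h'|[h'|h']]]].
      * by apply: (hA' 11 isT); apply: tup5; lia.
      * by apply: (hA' 9 isT); apply: tup5; lia.
      * by apply: (hA' 7 isT); apply: tup5; lia.
      * by apply: (hA' 6 isT); apply: tup5; lia.
      * by apply: (hA' 5 isT); apply: tup5; lia.
    + have : (m13 = 0 \/ m13 = 1 \/ m13 = 2 \/ m13 = 3)%N by lia.
      case=> [h'|[h'|[h'|h']]].
      * by apply: (hA' 13 isT); apply: tup5; lia.
      * by apply: (hA' 12 isT); apply: tup5; lia.
      * by apply: (hA' 10 isT); apply: tup5; lia.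
      * by apply: (hA' 8 isT); apply: tup5; lia.
have hfor : (m33 + m34 + m44 + 1 <= v3 + v4)%N by lia.
have hsum : (m11 + m12 + m13 + m14 + m22 + m23 + m24 + m33 + m34 + m44 + 1 = n)%N by lia.
have hkey : ((0 < v4) \/ (v4 = 0 /\ 4 <= v3) \/ (v4 = 0 /\ v3 = 3 /\ m33 <= 1)
             \/ (v4 = 0 /\ v3 = 3 /\ 1 <= m13))%N.
  case: hcase => [->|[h4z h3c]]; first by left.
  have h3o : (v3 = 3 \/ 4 <= v3)%N by lia.
  case: h3o => h3'; last by right; left.
  have hmo : (m33 <= 1 \/ 1 <= m13 \/ (m33 = 2 /\ m13 = 0))%N by lia.
  case: hmo => [hq|[hq|[hq hq']]]; first by right; right; left.
    by right; right; right.
  exfalso; apply: hO; lia.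
move: (s2b R) (s5b R) (s8b R) (s10b R) (s13b R) (s17b R) (s18b R) (s20b R) (s25b R) (s32b R).
move=> /andP [b2l b2u] /andP [b5l b5u] /andP [b8l b8u] /andP [b10l b10u] /andP [b13l b13u].
move=> /andP [b17l b17u] /andP [b18l b18u] /andP [b20l b20u] /andP [b25l b25u] /andP [b32l b32u].
have q11 := prodlb m11 (d2b R).
have q12 := prodlb m12 (d5b R).
have q13 := prodlb m13 (d10b R).
have q14 := prodlb m14 (d17b R).
have q23 := prodlb m23 (d13b R).
have q24 := prodlb m24 (d20b R).
have q33 := prodlb m33 (d18b R).
have q34 := prodlb m34 (d25b R).
have q44 := prodlb m44 (d32b R).
have rsum := congr1 (fun z : nat => (z%:R : R) * Num.sqrt 8) hsum.
have r1 := congr1 (fun z : nat => (z%:R : R)) hv1.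
have r3 := congr1 (fun z : nat => (z%:R : R)) h3.
have r4 := congr1 (fun z : nat => (z%:R : R)) h4.
have r1' := congr1 (fun z : nat => (z%:R : R)) h1.
have rf : ((m33 + m34 + m44 + 1)%N%:R <= (v3 + v4)%N%:R :> R) by rewrite ler_nat.
move: rsum r1 r3 r4 r1' rf; rewrite /= !natrD ?natrM ?mulrDl => rsum r1 r3 r4 r1' rf.
have x0 : forall z : nat, (0 <= z%:R :> R) by move=> z; rewrite ler0n.
move: (x0 m11) (x0 m12) (x0 m13) (x0 m14) (x0 m22) (x0 m23) (x0 m24) (x0 m33) (x0 m34) (x0 m44) (x0 v3) (x0 v4) (x0 n) => y11 y12 y13 y14 y22 y23 y24 y33 y34 y44 yv3 yv4 yn.
have rn : (13 <= n%:R :> R) by rewrite (ler_nat R 13 n).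
rewrite /SOv.
have rm11 : (m11%:R = 0 :> R) by rewrite h11.
clear b2l b2u b5l b8u b10l b10u b13l b17l b17u b18l b20l b20u b25l b25u b32l b32u x0.
case: hkey => [hk|[[hk1 hk2]|[[hk1 [hk2 hk3]]|[hk1 [hk2 hk3]]]]].
- have rk : (1 <= v4%:R :> R) by rewrite (ler_nat R 1 v4).
  lra.
- have rk1 : (v4%:R = 0 :> R) by rewrite hk1.
  have rk2 : (4 <= v3%:R :> R) by rewrite (ler_nat R 4 v3).
  lra.
- have rk1 : (v4%:R = 0 :> R) by rewrite hk1.
  have rk2 : (v3%:R = 3 :> R) by rewrite hk2.
  have rk3 : (m33%:R <= 1 :> R) by rewrite (ler_nat R m33 1).
  lra.
- have rk1 : (v4%:R = 0 :> R) by rewrite hk1.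
  have rk2 : (v3%:R = 3 :> R) by rewrite hk2.
  have rk3 : (1 <= m13%:R :> R) by rewrite (ler_nat R 1 m13).
  lra.
Qed.

End MN4.
Import MN4.

Module MM.
Local Open Scope ring_scope.

Lemma SO_vec (R : rcfType) n (e : rel 'I_n) a b c d j : chem_tree e -> (13 <= n)%N ->
  mvec e = (a, b, c, d, n - j)%N -> (j <= n)%N -> (a + b + c + d + (n - j) = n - 1)%N ->
  SO R e = SOv R n a b c d j.
Proof.
move=> ct hn hv hj hs; have n1 : (1 < n)%N by lia.
rewrite (SO_m R ct n1); have he := edges_sum ct n1.
move: hv he; rewrite /mvec.
move: (medges e 1 1) (medges e 1 2) (medges e 1 3) (medges e 1 4) (medges e 2 2)
  (medges e 2 3) (medges e 2 4) (medges e 3 3) (medges e 3 4) (medges e 4 4).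
move=> m11 m12 m13 m14 m22 m23 m24 m33 m34 m44 [-> -> -> -> ->] he.
have z : (m11 = 0 /\ m14 = 0 /\ m24 = 0 /\ m34 = 0 /\ m44 = 0)%N by lia.
case: z => -> [-> [-> [-> ->]]].
rewrite /SOv natrB //; lra.
Qed.

Lemma maxdeg3 n (e : rel 'I_n) : chem_tree e -> (1 < n)%N -> nverts e 4 = 0%N -> max_deg_le e 3.
Proof.
move=> ct n1 h4 u; have := deg_range ct n1 u.
have : u \notin [set u | deg e u == 4].
  apply/negP => hu; have : (0 < nverts e 4)%N by apply/card_gt0P; exists u.
  by rewrite h4.
rewrite inE; case: (deg e u) => [|[|[|[|[|k]]]]] //.
Qed.

End MM.
Import MM.

Unset Implicit Arguments.
Local Open Scope ring_scope.

Theorem theorem3p3 (R : rcfType) (n : nat) (hn : (13 <= n)%N)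
  (e1 e2 e3 e4 e5 e6 e7 e8 e9 e10 e11 e12 e13 e14 e : rel 'I_n) :
  in_A e1 1 -> in_A e2 4 -> in_A e3 3 -> in_A e4 2 -> in_A e5 13 ->
  in_A e6 11 -> in_A e7 12 -> in_A e8 9 -> in_A e9 10 -> in_A e10 7 ->
  in_A e11 8 -> in_A e12 6 -> in_A e13 5 -> in_Omega e14 ->
  chem_tree e ->
  (forall i : nat, (1 <= i <= 13)%N -> ~ in_A e i) ->
  ~ in_Omega e ->
  [/\ SO R e1 < SO R e2, SO R e2 < SO R e3, SO R e3 < SO R e4,
      SO R e4 < SO R e5 &
   [/\ SO R e5 < SO R e6, SO R e6 < SO R e7, SO R e7 < SO R e8,
       SO R e8 < SO R e9 &
   [/\ SO R e9 < SO R e10, SO R e10 < SO R e11, SO R e11 < SO R e12,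
       SO R e12 < SO R e13 &
   (SO R e13 < SO R e14 /\ SO R e14 < SO R e)]]].
Proof.
move=> h1 h2 h3 h4 h5 h6 h7 h8 h9 h10 h11 h12 h13 h14 ct hA hO.
have n1 : (1 < n)%N by lia.
have n2 : (2 < n)%N by lia.
have E1 : SO R e1 = SOv R n 0 0 2 0 3 by case: h1 => c _ _ v; apply: (SO_vec _ c hn v); lia.
have E2 : SO R e2 = SOv R n 0 3 3 0 7 by case: h2 => c _ _ v; apply: (SO_vec _ c hn v); lia.
have E3 : SO R e3 = SOv R n 0 2 2 1 6 by case: h3 => c _ _ v; apply: (SO_vec _ c hn v); lia.
have E4 : SO R e4 = SOv R n 0 1 1 2 5 by case: h4 => c _ _ v; apply: (SO_vec _ c hn v); lia.
have E5 : SO R e5 = SOv R n 1 4 4 0 10 by case: h5 => c _ _ v; apply: (SO_vec _ c hn v); lia.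
have E6 : SO R e6 = SOv R n 0 6 4 0 11 by case: h6 => c _ _ v; apply: (SO_vec _ c hn v); lia.
have E7 : SO R e7 = SOv R n 1 3 3 1 9 by case: h7 => c _ _ v; apply: (SO_vec _ c hn v); lia.
have E8 : SO R e8 = SOv R n 0 5 3 1 10 by case: h8 => c _ _ v; apply: (SO_vec _ c hn v); lia.
have E9 : SO R e9 = SOv R n 1 2 2 2 8 by case: h9 => c _ _ v; apply: (SO_vec _ c hn v); lia.
have E10 : SO R e10 = SOv R n 0 4 2 2 9 by case: h10 => c _ _ v; apply: (SO_vec _ c hn v); lia.
have E11 : SO R e11 = SOv R n 1 1 1 3 7 by case: h11 => c _ _ v; apply: (SO_vec _ c hn v); lia.
have E12 : SO R e12 = SOv R n 0 3 1 3 8 by case: h12 => c _ _ v; apply: (SO_vec _ c hn v); lia.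
have E13 : SO R e13 = SOv R n 0 2 0 4 7 by case: h13 => c _ _ v; apply: (SO_vec _ c hn v); lia.
have E14 : SO R e14 = SOv R n 2 5 5 0 13.
  case: h14 => c _ [q12 q23 q13] [q33 q22].
  apply: SO_vec => //; last by lia.
  by rewrite /mvec q12 q23 q13 q33 q22.
have FIN : SO R e14 < SO R e.
  rewrite E14 (SO_m R ct n1).
  have hd := deg_range ct n1.
  have st : simple_graph e by case: ct => [[]].
  apply: (@final R n (nverts e 1) (nverts e 2) (nverts e 3) (nverts e 4) (medges e 1 1) (medges e 1 2)
    (medges e 1 3) (medges e 1 4) (medges e 2 2) (medges e 2 3) (medges e 2 4) (medges e 3 3)
    (medges e 3 4) (medges e 4 4) hn).
  - exact: nv_sum.
  - exact: edges_sum.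
  - have hs : (1 * nverts e 1 = 2 * medges e 1 1 + 1 * medges e 1 2 + 1 * medges e 1 3 + 1 * medges e 1 4 + 0 * medges e 2 2 + 0 * medges e 2 3 + 0 * medges e 2 4 + 0 * medges e 3 3 + 0 * medges e 3 4 + 0 * medges e 4 4)%N := hs_gen 1 st hd.
    lia.
  - have hs : (2 * nverts e 2 = 0 * medges e 1 1 + 1 * medges e 1 2 + 0 * medges e 1 3 + 0 * medges e 1 4 + 2 * medges e 2 2 + 1 * medges e 2 3 + 1 * medges e 2 4 + 0 * medges e 3 3 + 0 * medges e 3 4 + 0 * medges e 4 4)%N := hs_gen 2 st hd.
    lia.
  - have hs : (3 * nverts e 3 = 0 * medges e 1 1 + 0 * medges e 1 2 + 1 * medges e 1 3 + 0 * medges e 1 4 + 0 * medges e 2 2 + 1 * medges e 2 3 + 0 * medges e 2 4 + 2 * medges e 3 3 + 1 * medges e 3 4 + 0 * medges e 4 4)%N := hs_gen 3 st hd.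
    lia.
  - have hs : (4 * nverts e 4 = 0 * medges e 1 1 + 0 * medges e 1 2 + 0 * medges e 1 3 + 1 * medges e 1 4 + 0 * medges e 2 2 + 0 * medges e 2 3 + 1 * medges e 2 4 + 0 * medges e 3 3 + 1 * medges e 3 4 + 2 * medges e 4 4)%N := hs_gen 4 st hd.
    lia.
  - exact: forest_deg.
  - exact: m11_0.
  - exact: cross2.
  - move=> h4z h3le i hi heq; apply: (hA i hi); split => //.
    exact: maxdeg3.
  - move=> [q3 [q2 [q1 [q12 [q23 [q13 [q33 q22]]]]]]]; apply: hO; split => //.
move: (chain R n); rewrite -E1 -E2 -E3 -E4 -E5 -E6 -E7 -E8 -E9 -E10 -E11 -E12 -E13 -E14.
by case=> [? ? ? ? [? ? ? ? [? ? ? ? ?]]]; split => //; split => //; split.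
Qed.
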